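(* Let $G$ be a $(3,4)$-biregular $X,Y$-bigraph in which every vertex of $X$ has degree 3 and every vertex of $Y$ has degree 4. If $G$ has a proper path-factor, then $G$ has an interval coloring using 6 colors (i.e., an interval coloring with colors from $\{1,\dots,6\}$).
   Context: Graphs may have multiple edges. An $X,Y$-bigraph is a bipartite graph with partite sets $X$ and $Y$. A $(3,4)$-biregular bigraph is a bipartite graph in which every vertex of one part has degree 3 and every vertex of the other part has degree 4. A proper path-factor of such a graph $G$ (with $X$ the degree-3 side) is a spanning subgraph of $G$ each of whose components is a path with both endpoints in $X$ and length (number of edges) in $\{2,4,6,8\}$. An interval coloring of a graph is a proper edge-coloring by positive integers such that at every vertex the set of colors on its incident edges is a set of consecutive integers; an interval 6-coloring uses the colors $1,\dots,6$. *)

(* Defs.v *)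
From mathcomp Require Import all_boot.
Set Implicit Arguments. Unset Strict Implicit. Unset Printing Implicit Defensive.

(* An X,Y-bigraph (multiple edges allowed) is given by partite vertex sets
   X, Y : finType, an edge type E : finType, and endpoint maps
   ex : E -> X, ey : E -> Y.  The vertex set of the graph is X + Y. *)

Section Bigraph.
Variables (X Y E : finType) (ex : E -> X) (ey : E -> Y).

Definition incident (e : E) (v : X + Y) : bool :=
  (v == inl (ex e)) || (v == inr (ey e)).

Definition degX (x : X) : nat := #|[set e : E | ex e == x]|.
Definition degY (y : Y) : nat := #|[set e : E | ey e == y]|.

Definition biregular34 : Prop :=
  (forall x : X, degX x = 3) /\ (forall y : Y, degY y = 4).

Definition joins (e : E) (u w : X + Y) : bool :=
  ((u == inl (ex e)) && (w == inr (ey e))) ||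
  ((w == inl (ex e)) && (u == inr (ey e))).

(* A path with vertex sequence vs = v_0 ... v_k and edge sequence
   es = e_1 ... e_k: pairwise distinct vertices, distinct edges, and
   e_(i+1) joins v_i and v_(i+1).  Its length is size es. *)
Definition is_path (vs : seq (X + Y)) (es : seq E) : bool :=
  [&& size vs == (size es).+1, uniq vs, uniq es &
      all (fun p : (X + Y) * (X + Y) * E => joins p.2 p.1.1 p.1.2)
          (zip (zip vs (behead vs)) es)].

Definition is_inl (v : X + Y) : bool := if v is inl _ then true else false.

(* A proper path-factor: a spanning subgraph with edge set F whose
   components are the paths listed in P (each given as (vertices, edges)):
   the paths are pairwise vertex-disjoint, cover every vertex, their
   edge sets make up F, each has both endpoints in X and length in
   {2,4,6,8}.  (Vertex-disjoint paths covering all vertices whose edges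
   form F are exactly the components of the spanning subgraph (X+Y, F).) *)
Definition ends_in_X (vs : seq (X + Y)) : bool :=
  if vs is v0 :: vs' then is_inl v0 && is_inl (last v0 vs') else false.

Definition proper_path_factor (F : {set E}) : Prop :=
  exists P : seq (seq (X + Y) * seq E),
    [/\ forall p, p \in P ->
          [/\ is_path p.1 p.2, ends_in_X p.1 & size p.2 \in [:: 2; 4; 6; 8]],
        pairwise (fun p q : seq (X + Y) * seq E => ~~ has (mem p.1) q.1) P,
        forall v : X + Y, has (fun p : seq (X + Y) * seq E => v \in p.1) P &
        forall e : E, (e \in F) = has (fun p : seq (X + Y) * seq E => e \in p.2) P].

Definition has_proper_path_factor : Prop :=
  exists F : {set E}, proper_path_factor F.

Definition interval_coloring (k : nat) (c : E -> nat) : Prop :=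
  [/\ forall e, 1 <= c e <= k,
      forall e e' v, e != e' -> incident e v -> incident e' v -> c e != c e' &
      forall v e1 e2 n, incident e1 v -> incident e2 v -> c e1 <= n <= c e2 ->
        exists e, incident e v /\ c e = n].
End Bigraph.

(* Main.v *)
Require Import Defs.
From mathcomp Require Import all_boot.
From mathcomp Require Import zify.
Set Implicit Arguments. Unset Strict Implicit. Unset Printing Implicit Defensive.


Definition orient (V T : Type) (f : T -> V * V) (o : T -> bool) (k : T) : V * V :=
  if o k then f k else ((f k).2, (f k).1).

Definition balanced (V T : eqType) (g : T -> V * V) (s : seq T) :=
  forall w, count (fun k => (g k).1 == w) s <= (count (fun k => (g k).2 == w) s).+1 /\
            count (fun k => (g k).2 == w) s <= (count (fun k => (g k).1 == w) s).+1.

Lemma count_perm_rem (T : eqType) (a : pred T) (x : T) (s : seq T) :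
  x \in s -> count a s = a x + count a (rem x s).
Proof.
move=> xs; have /permP -> := perm_to_rem xs; by [].
Qed.

Lemma orient_lemma (V : eqType) : forall n (T : eqType) (f : T -> V * V) (s : seq T),
  size s <= n -> uniq s -> exists o : T -> bool, balanced (orient f o) s.
Proof.
elim=> [|n IH] T f s.
  rewrite leqn0 => /nilP -> _; exists (fun _ => true) => w /=; by [].
case: s => [|k1 s1].
  move=> _ _; exists (fun _ => true) => w /=; by [].
rewrite /= ltnS => hs /andP [k1s1 us1].
have caseB : forall f : T -> V * V,
    has (fun k => ((f k).1 == (f k1).2) || ((f k).2 == (f k1).2)) s1 ->
    exists o : T -> bool, balanced (orient f o) (k1 :: s1).
  move=> {}f /hasP [k2 k2s1 hk2].
  set u := (f k1).1; set v := (f k1).2.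
  set w' := if (f k2).1 == v then (f k2).2 else (f k2).1.
  pose f' := fun ok : option T => if ok is Some k then f k else (u, w').
  pose s' := None :: map Some (rem k2 s1).
  have hs' : size s' <= n.
    have hp : 0 < size s1 by case: (s1) k2s1.
    rewrite /s' /= size_map size_rem //; lia.
  have us' : uniq s'.
    rewrite /s' /= map_inj_uniq; last by move=> ? ? [].
    rewrite rem_uniq // andbT; apply/mapP => -[] //.
  have [o' bo'] := IH _ f' s' hs' us'.
  pose o := fun k => if k == k1 then o' None
                     else if k == k2 then (o' None == ((f k2).1 == v)) else o' (Some k).
  exists o => w.
  have k21 : k2 != k1 by apply: contraNneq k1s1 => <-.
  have hrest : forall (P : V * V -> bool),
      count (fun k => P (orient f o k)) (rem k2 s1) =
      count (fun ok => P (orient f' o' ok)) (map Some (rem k2 s1)).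
    move=> P; rewrite count_map; apply: eq_in_count => k.
    rewrite mem_rem_uniq // => /andP [kk2 ks1].
    have kk1 : k != k1 by apply: contraNneq k1s1 => <-.
    by rewrite /orient /o /= (negbTE kk1) (negbTE kk2).
  have ek1 : orient f o k1 = if o' None then (u, v) else (v, u).
    by rewrite /orient /o eqxx /u /v; case: (o' None); case: (f k1).
  have ek2 : orient f o k2 = if o' None then (v, w') else (w', v).
    rewrite /orient /o (negbTE k21) eqxx /w'.
    move: hk2; case: (f k2) => c d /= hk2.
    case: (c =P v) => [->|ne]; rewrite ?eqxx /=; first by case: (o' None).
    move: hk2; rewrite (introF eqP ne) /= => /eqP ->.
    by case: (o' None).
  have eN : orient f' o' None = if o' None then (u, w') else (w', u) by [].
  have [h1 h2] := bo' w.
  move: h1 h2; rewrite /s' /= -(hrest (fun p => p.1 == w)) -(hrest (fun p => p.2 == w)).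
  rewrite !(count_perm_rem _ k2s1) /= ek1 ek2 eN.
  set C := count _ (rem k2 s1); set D := count _ (rem k2 s1).
  by case: (o' None) => /= h1 h2; split; lia.
set u := (f k1).1; set v := (f k1).2.
case: (boolP (u == v)) => [/eqP huv|nuv].
  have [o1 bo1] := IH _ f s1 hs us1.
  exists o1 => w; have [h1 h2] := bo1 w.
  rewrite /=; have -> : orient f o1 k1 = (v, v) by rewrite /orient [f k1]surjective_pairing /= -/u -/v huv; case: (o1 k1).
  rewrite /=; split; lia.
case: (boolP (has (fun k => ((f k).1 == v) || ((f k).2 == v)) s1)) => hv.
  exact: (caseB f hv).
case: (boolP (has (fun k => ((f k).1 == u) || ((f k).2 == u)) s1)) => hu.
  pose f1 := fun k => if k == k1 then (v, u) else f k.
  have [|o1 bo1] := caseB f1.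
    rewrite /f1 eqxx /=; rewrite -(eq_in_has (a1 := fun k => ((f k).1 == u) || ((f k).2 == u))) //.
    move=> k ks1 /=.
    by have -> : (k == k1) = false by apply/negbTE; apply: contraNneq k1s1 => <-.
  exists (fun k => if k == k1 then ~~ o1 k1 else o1 k).
  suff e : forall k, k \in k1 :: s1 -> orient f (fun k => if k == k1 then ~~ o1 k1 else o1 k) k = orient f1 o1 k.
    move=> w; rewrite !(eq_in_count (a1 := fun k => (orient f _ k).1 == w) (a2 := fun k => (orient f1 o1 k).1 == w)); last first.
      by move=> k /e ->.
    rewrite !(eq_in_count (a1 := fun k => (orient f _ k).2 == w) (a2 := fun k => (orient f1 o1 k).2 == w)); last first.
      by move=> k /e ->.
    exact: bo1.
  move=> k _; rewrite /orient /f1; case: (k =P k1) => [->|_] //.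
  by case: (o1 k1); rewrite /u /v //=; case: (f k1).
have [o1 bo1] := IH _ f s1 hs us1.
exists o1 => w; have [h1 h2] := bo1 w.
have nin : forall k, k \in s1 -> [&& (f k).1 != u, (f k).2 != u, (f k).1 != v & (f k).2 != v].
  move=> k ks1; apply/and4P; split.
  - by apply: contraNneq hu => e; apply/hasP; exists k => //; rewrite e eqxx.
  - by apply: contraNneq hu => e; apply/hasP; exists k => //; rewrite e eqxx orbT.
  - by apply: contraNneq hv => e; apply/hasP; exists k => //; rewrite e eqxx.
  - by apply: contraNneq hv => e; apply/hasP; exists k => //; rewrite e eqxx orbT.
case: (boolP (w \in [:: u; v])) => hw.
  have c0 : count (fun k => (orient f o1 k).1 == w) s1 = 0 /\ count (fun k => (orient f o1 k).2 == w) s1 = 0.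
    split; rewrite (eq_in_count (a2 := pred0)) ?count_pred0 // => k /nin /and4P [a b c d];
    rewrite /orient; case: (o1 k) => /=; move: hw; rewrite !inE => /orP [] /eqP ->; apply/negbTE => //.
  have [c1 c2] := c0.
  rewrite /= c1 c2 /orient; case: (o1 k1) => /=; split; lia.
move: hw; rewrite !inE negb_or => /andP [hwu hwv].
have [e1 e2] : ((orient f o1 k1).1 == w) = false /\ ((orient f o1 k1).2 == w) = false.
  rewrite /orient [f k1]surjective_pairing -/u -/v.
  move: hwu hwv; rewrite ![w == _]eq_sym => hwu hwv.
  by case: (o1 k1); rewrite /= (negbTE hwu) (negbTE hwv).
by rewrite /= e1 e2 /=; split; lia.
Qed.


Lemma count_enum_set (T:finType) (A : {set T}) (a : pred T) :
  count a (enum A) = #|[set x in A | a x]|.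
Proof.
rewrite cardE -size_filter; apply/perm_size/uniq_perm.
- by rewrite filter_uniq // enum_uniq.
- by rewrite enum_uniq.
- by move=> x; rewrite mem_filter !mem_enum !inE andbC.
Qed.

Lemma count2 (T : eqType) (a : pred T) (s : seq T) x y :
  uniq s -> x \in s -> y \in s -> x != y -> a x -> a y -> 1 < count a s.
Proof.
move=> us xs ys nxy ax ay.
rewrite (count_perm_rem _ xs) ax (count_perm_rem a (_ : y \in rem x s)) ?ay //.
by rewrite mem_rem_uniq // inE ys andbT eq_sym.
Qed.

Section PathFacts.
Variables (X Y E : finType) (ex : E -> X) (ey : E -> Y).

Lemma joinsP (e : E) a b : joins ex ey e a b ->
  (a = inl (ex e) /\ b = inr (ey e)) \/ (b = inl (ex e) /\ a = inr (ey e)).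
Proof. by rewrite /joins => /orP [] /andP [/eqP -> /eqP ->]; [left|right]. Qed.

Lemma joins_inc (e : E) a b : joins ex ey e a b -> incident ex ey e a /\ incident ex ey e b.
Proof. by case/joinsP => -[-> ->]; rewrite /incident !eqxx ?orbT. Qed.

Lemma path_join vs es j x0 e0 : is_path ex ey vs es -> j < size es ->
  joins ex ey (nth e0 es j) (nth x0 vs j) (nth x0 vs j.+1).
Proof.
case/and4P => /eqP hs _ _ /(all_nthP ((x0,x0),e0)) h hj.
have hz : j < size (zip (zip vs (behead vs)) es).
  by rewrite !size_zip size_behead hs; lia.
have hz2 : j < size (zip vs (behead vs)) by rewrite size_zip size_behead hs; lia.
by have := h j hz; rewrite nth_zip_cond hz /= nth_zip_cond hz2 /= nth_behead.
Qed.

Lemma path_alt vs es x0 : is_path ex ey vs es -> is_inl (nth x0 vs 0) ->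
  forall i, i <= size es -> is_inl (nth x0 vs i) = ~~ odd i.
Proof.
move=> hp h0; elim=> [|i IH] hi //.
have [e0 _] : exists e0 : E, true by case: (es) hi => // e0; exists e0.
have := path_join x0 e0 hp hi; case/joinsP => -[e1 e2];
  move: (IH (ltnW hi)); rewrite e1 e2 /= => <- //.
Qed.
End PathFacts.

Definition tab (n : nat) (t1 t2 t3 : bool) : seq nat :=
  match n with
  | 2 => [:: 2; 5]
  | 4 => if t1 then [:: 2; 1; 2; 5] else [:: 5; 6; 5; 2]
  | 6 => match t1, t2 with
         | true, true => [:: 2; 1; 2; 1; 2; 5]
         | true, false => [:: 2; 1; 2; 5; 6; 5]
         | false, true => [:: 5; 6; 5; 2; 1; 2]
         | false, false => [:: 5; 6; 5; 6; 5; 2]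
         end
  | _ => match t1, t2 with
         | true, true => [:: 2; 1; 2; 1; 2; 5; 6; 5]
         | true, false => [:: 2; 1; 2; 5; 6; 5; 6; 5]
         | false, true => [:: 5; 6; 5; 2; 1; 2; 1; 2]
         | false, false => [:: 5; 6; 5; 6; 5; 2; 1; 2]
         end
  end.

Definition ttype (t1 t2 t3 : bool) (i : nat) := nth false [:: false; t1; t2; t3] i./2.

Definition vok (n : nat) (t1 t2 t3 : bool) (i : nat) : bool :=
  let col := tab n t1 t2 t3 in
  let c1 := nth 0 col i.-1 in let c2 := nth 0 col i in
  if i == 0 then c2 \in [:: 2; 5]
  else if i == n then c1 \in [:: 2; 5]
  else if odd i then (c1 != c2) && has (fun a => (a <= c1 <= a + 3) && (a <= c2 <= a + 3)) [:: 1; 2; 3]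
  else (c1 != c2) && (if ttype t1 t2 t3 i then (c1 \in [:: 1; 2]) && (c2 \in [:: 1; 2])
                      else (c1 \in [:: 5; 6]) && (c2 \in [:: 5; 6])).

Definition colok (n : nat) (t1 t2 t3 : bool) : bool :=
  all (fun j => nth 0 (tab n t1 t2 t3) j \in [:: 1; 2; 5; 6]) (iota 0 n).

Lemma tab_ok n t1 t2 t3 : n \in [:: 2; 4; 6; 8] -> (n == 8 -> t1 != t3) ->
  colok n t1 t2 t3 && all (vok n t1 t2 t3) (iota 0 n.+1).
Proof.
rewrite !inE => /or4P [] /eqP ->; case: t1; case: t2; case: t3 => //= h;
  by move: (h isT).
Qed.

Lemma even_mid k n : 0 < k -> k < n -> ~~ odd k -> n \in [:: 2; 4; 6; 8] -> k \in [:: 2; 4; 6].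
Proof.
move=> h1 h2 h3; rewrite !inE => /or4P [] /eqP hn; subst n; move: h1 h2 h3;
  do 9? (case: k => [|k] //).
Qed.

Lemma rngY a x : a <= x <= a + 3 -> a <= x < a + 4.
Proof. by rewrite (addnS a 3) ltnS. Qed.

Section Main.
Variables (X Y E : finType) (ex : E -> X) (ey : E -> Y).
Variables (F : {set E}) (P : seq (seq (X + Y) * seq E)).
Hypothesis hP : forall p, p \in P ->
  [/\ is_path ex ey p.1 p.2, ends_in_X p.1 & size p.2 \in [:: 2; 4; 6; 8]].
Hypothesis hdisj : pairwise (fun p q : seq (X + Y) * seq E => ~~ has (mem p.1) q.1) P.
Hypothesis hcov : forall v : X + Y, has (fun p : seq (X + Y) * seq E => v \in p.1) P.
Hypothesis hF : forall e : E, (e \in F) = has (fun p : seq (X + Y) * seq E => e \in p.2) P.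
Hypothesis hX : forall x, degX ex x = 3.
Hypothesis hY : forall y, degY ey y = 4.
Variables (v0 : X + Y) (e0 : E).

Definition dp : seq (X + Y) * seq E := ([::], [::]).

Definition fT (k : E + nat) : (X + Y) * (X + Y) :=
  match k with
  | inl e => (inl (ex e), inr (ey e))
  | inr m => (nth v0 (nth dp P m).1 2, nth v0 (nth dp P m).1 6)
  end.

Definition L8 := [seq m <- iota 0 (size P) | size (nth dp P m).2 == 8].
Definition s0 : seq (E + nat) := map inl (enum (~: F)) ++ map inr L8.

Variable o : E + nat -> bool.
Hypothesis hbal : balanced (orient fT o) s0.

Definition ty (v : X + Y) : bool :=
  if v is inl x then [exists e, (e \notin F) && (ex e == x) && o (inl e)] else false.

Definition colp (p : seq (X + Y) * seq E) :=
  let tys := map ty p.1 in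
  tab (size p.2) (nth false tys 2) (nth false tys 4) (nth false tys 6).

Definition pathOf (v : X + Y) := nth dp P (find (fun p => v \in p.1) P).

Definition c (e : E) : nat :=
  if e \in F then
    let p := pathOf (inl (ex e)) in nth 0 (colp p) (index e p.2)
  else if o (inl e) then 3 else 4.

Definition Inc (v : X + Y) := [set e | incident ex ey e v].

Lemma pathOfP v : pathOf v \in P /\ v \in (pathOf v).1.
Proof.
split; first by rewrite /pathOf mem_nth // -has_find.
exact: (nth_find dp (hcov v)).
Qed.

Lemma Pvs p : p \in P -> size p.1 = (size p.2).+1.
Proof. by case/hP => /and4P [/eqP -> _ _ _]. Qed.

Lemma P_inj m m' : m < size P -> m' < size P -> nth dp P m = nth dp P m' -> m = m'.
Proof.
move=> hm hm' e.
have nz : forall q, q \in P -> exists v, v \in q.1.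
  move=> q /Pvs; case: q.1 => // v ? _; exists v; exact: mem_head.
have [v hv] := nz _ (mem_nth dp hm).
have key : forall a b, a < size P -> b < size P -> a < b -> nth dp P a = nth dp P b -> False.
  move=> a b ha hb ab eab; have := (pairwiseP dp hdisj) a b ha hb ab.
  have [w hw] := nz _ (mem_nth dp ha).
  by rewrite -eab => /hasP; apply; exists w.
by case: (ltngtP m m') => // h; [case: (key _ _ hm hm' h e) | case: (key _ _ hm' hm h (esym e))].
Qed.

Lemma path_uniq p q v : p \in P -> q \in P -> v \in p.1 -> v \in q.1 -> p = q.
Proof.
move=> /(nthP dp) [a ha <-] /(nthP dp) [b hb <-] vp vq.
case: (ltngtP a b) => h; last by rewrite h.
- by have := (pairwiseP dp hdisj) a b ha hb h => /hasP []; exists v.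
- by have := (pairwiseP dp hdisj) b a hb ha h => /hasP []; exists v.
Qed.

Lemma pathOf_eq p v : p \in P -> v \in p.1 -> pathOf v = p.
Proof. by move=> pP vp; have [h1 h2] := pathOfP v; apply: path_uniq h1 pP h2 vp. Qed.


Lemma edge_inF p j : p \in P -> j < size p.2 -> nth e0 p.2 j \in F.
Proof. by move=> pP hj; rewrite hF; apply/hasP; exists p => //; rewrite mem_nth. Qed.

Lemma edge_inc p j : p \in P -> j < size p.2 ->
  incident ex ey (nth e0 p.2 j) (nth v0 p.1 j) /\ incident ex ey (nth e0 p.2 j) (nth v0 p.1 j.+1).
Proof. by move=> /hP [hp _ _] hj; apply: joins_inc; apply: path_join. Qed.

Lemma inc_mem e v p : e \in p.2 -> p \in P -> incident ex ey e v ->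
  v \in p.1 /\ (index e p.2 = index v p.1 \/ (index e p.2).+1 = index v p.1).
Proof.
move=> ep pP hinc; have [hp _ _] := hP pP.
have hs := Pvs pP; have [_ uv _ _] := and4P hp.
set j := index e p.2; have hj : j < size p.2 by rewrite index_mem.
have := path_join v0 e0 hp hj; rewrite nth_index //.
have hv : forall k, k <= size p.2 -> v = nth v0 p.1 k ->
    v \in p.1 /\ index v p.1 = k.
  by move=> k hk ->; rewrite mem_nth ?index_uniq // hs.
move: hinc; rewrite /incident => /orP [] /eqP ev /joinsP [] [e1 e2].
- by have [? ->] := hv j (ltnW hj) (etrans ev (esym e1)); split => //; left.
- by have [? <-] := hv j.+1 hj (etrans ev (esym e1)); split => //; right.
- by have [? <-] := hv j.+1 hj (etrans ev (esym e2)); split => //; right.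
- by have [? ->] := hv j (ltnW hj) (etrans ev (esym e2)); split => //; left.
Qed.

Lemma F_inc v e : e \in F -> incident ex ey e v ->
  e \in (pathOf v).2 /\ (index e (pathOf v).2 = index v (pathOf v).1 \/
                          (index e (pathOf v).2).+1 = index v (pathOf v).1).
Proof.
rewrite hF => /hasP [q qP eq] hinc.
have [vq _] := inc_mem eq qP hinc.
by rewrite (pathOf_eq qP vq); split => //; have [] := inc_mem eq qP hinc.
Qed.

Lemma cF v e : e \in F -> incident ex ey e v ->
  c e = nth 0 (colp (pathOf v)) (index e (pathOf v).2).
Proof.
move=> eF hinc; rewrite /c eF.
have [ep _] := F_inc eF hinc.
have [pP _] := pathOfP v.
have hx : incident ex ey e (inl (ex e)) by rewrite /incident eqxx.
have [xp _] := inc_mem ep pP hx.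
by rewrite (pathOf_eq pP xp).
Qed.


Definition Fset v := [set e | (e \in F) && incident ex ey e v].
Definition nFset v := [set e | (e \notin F) && incident ex ey e v].

Lemma card_inc v : #|Inc v| = if v is inl _ then 3 else 4.
Proof.
case: v => [x|y].
- rewrite -(hX x) /degX; apply: eq_card => e; rewrite !inE /incident.
  by rewrite orbF; apply/eqP/eqP => [[]|->].
- rewrite -(hY y) /degY; apply: eq_card => e; rewrite !inE /incident.
  by apply/eqP/eqP => [[]|->].
Qed.

Lemma split_card v : #|Fset v| + #|nFset v| = #|Inc v|.
Proof.
rewrite -(cardsID F (Inc v)); congr (_ + _); apply: eq_card => e;
  by rewrite !inE andbC.
Qed.

Lemma vinfo v :
  [/\ pathOf v \in P, index v (pathOf v).1 <= size (pathOf v).2,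
      nth v0 (pathOf v).1 (index v (pathOf v).1) = v,
      is_inl v = ~~ odd (index v (pathOf v).1)
    & size (pathOf v).2 \in [:: 2; 4; 6; 8]].
Proof.
set p := pathOf v; set i := index v p.1.
have [pP vp] := pathOfP v; rewrite -/p in pP vp.
have [hp hend hn] := hP pP.
have hi : i <= size p.2 by rewrite -ltnS -(Pvs pP) index_mem.
split => //; first by rewrite nth_index.
rewrite -{1}(nth_index v0 vp); apply: (path_alt hp) => //.
by move: hend; rewrite /ends_in_X; case: (p.1) => // a l /andP [].
Qed.

Lemma Fset_eq v :
  Fset v = [set e | ((0 < index v (pathOf v).1) && (e == nth e0 (pathOf v).2 (index v (pathOf v).1).-1))
                 || ((index v (pathOf v).1 < size (pathOf v).2) && (e == nth e0 (pathOf v).2 (index v (pathOf v).1)))].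
Proof.
have [pP hi hv _ _] := vinfo v.
set p := pathOf v in pP hi hv *; set i := index v p.1 in hi hv *.
apply/setP => e; rewrite !inE; apply/idP/idP.
- case/andP => eF hinc; have [ep [] hj] := F_inc eF hinc; rewrite -/p -/i in ep hj.
  + by apply/orP; right; rewrite -hj index_mem ep nth_index ?eqxx.
  + by apply/orP; left; rewrite -hj /= nth_index ?eqxx.
- case/orP => /andP [hi' /eqP ->].
  + have hj : i.-1 < size p.2 by rewrite (leq_trans _ hi) // prednK.
    rewrite edge_inF //=; have [_] := edge_inc pP hj.
    by rewrite prednK // hv.
  + by rewrite edge_inF //=; have [] := edge_inc pP hi'; rewrite hv.
Qed.

Lemma Fcard v :
  #|Fset v| = (0 < index v (pathOf v).1) + (index v (pathOf v).1 < size (pathOf v).2).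
Proof.
have [pP hi hv _ hn] := vinfo v.
rewrite Fset_eq.
set p := pathOf v in pP hi hv hn *; set i := index v p.1 in hi hv *.
have [hp _ _] := hP pP; have [_ _ ue _] := and4P hp.
have hn2 : 0 < size p.2 by move: hn; rewrite !inE; case/or4P => /eqP ->.
case: (posnP i) => [i0|ip].
  rewrite (_ : [set e | _] = [set nth e0 p.2 i]); last by apply/setP => e; rewrite !inE ?i0 /= ?hn2.
  by rewrite cards1 ?i0 ?hn2.
case: (ltnP i (size p.2)) => hin.
  rewrite (_ : [set e | _] = [set nth e0 p.2 i.-1; nth e0 p.2 i]); last by apply/setP => e; rewrite !inE ?ip ?hin.
  rewrite cards2 nth_uniq //; last by rewrite (leq_ltn_trans (leq_pred _) hin).
  by rewrite neq_ltn ltn_predL ip.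
rewrite (_ : [set e | _] = [set nth e0 p.2 i.-1]); last by apply/setP => e; rewrite !inE /= orbF.
by rewrite cards1.
Qed.


Lemma nFcard v :
  #|nFset v| + (0 < index v (pathOf v).1) + (index v (pathOf v).1 < size (pathOf v).2)
  = if is_inl v then 3 else 4.
Proof.
have h1 := split_card v; have h2 := card_inc v; rewrite Fcard in h1.
by case: v h1 h2 => [x|y] /= h1 h2; lia.
Qed.

Lemma uniq_L8 : uniq L8.
Proof. by rewrite filter_uniq // iota_uniq. Qed.

Lemma virt_le w k0 : k0 < 9 ->
  count (fun m => nth v0 (nth dp P m).1 k0 == w) L8 <=
  (index w (pathOf w).1 == k0) && (size (pathOf w).2 == 8).
Proof.
move=> hk0; set a := fun m => _.
have key : forall m, m \in L8 -> a m ->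
    [/\ index w (pathOf w).1 = k0, size (pathOf w).2 = 8 & m = index (pathOf w) P].
  move=> m; rewrite mem_filter mem_iota add0n => /andP [/eqP h8 hm] /eqP hw.
  have qP : nth dp P m \in P by rewrite mem_nth.
  have hs := Pvs qP; have [hp _ _] := hP qP; have [_ uv _ _] := and4P hp.
  have wq : w \in (nth dp P m).1 by rewrite -hw mem_nth // hs h8.
  rewrite (pathOf_eq qP wq); split => //.
    by rewrite -hw index_uniq // hs h8.
  by apply: P_inj => //; [rewrite index_mem | rewrite nth_index].
case: (boolP (has a L8)) => [/hasP [m mL am]|hn]; last first.
  by move: hn; rewrite has_count -leqNgt leqn0 => /eqP ->.
have [-> -> em] := key m mL am; rewrite !eqxx /=.
rewrite (eq_in_count (a2 := fun m => a m && (m == index (pathOf w) P))); last first.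
  move=> m' mL'; case: (boolP (a m')) => //= am'.
  by have [_ _ ->] := key m' mL' am'; rewrite eqxx.
apply: leq_trans (_ : count (pred1 (index (pathOf w) P)) L8 <= 1).
  by apply: sub_count => m' /andP [].
by rewrite count_uniq_mem ?uniq_L8 // leq_b1.
Qed.

Lemma tot_eq w :
  count (fun k => (fT k).1 == w) s0 + count (fun k => (fT k).2 == w) s0 =
  #|nFset w| + count (fun m => nth v0 (nth dp P m).1 2 == w) L8
             + count (fun m => nth v0 (nth dp P m).1 6 == w) L8.
Proof.
rewrite /s0 !count_cat !count_map !count_enum_set.
have e1 : #|[set x in ~: F | preim inl (fun k => (fT k).1 == w) x]| +
          #|[set x in ~: F | preim inl (fun k => (fT k).2 == w) x]| = #|nFset w|.
  case: w => [x|y].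
  - rewrite [X in _ + X]eq_card0 ?addn0; last by move=> e; rewrite !inE /= andbF.
    by apply: eq_card => e; rewrite /nFset !inE /incident /= orbF eq_sym.
  - rewrite eq_card0 ?add0n; last by move=> e; rewrite !inE /= andbF.
    by apply: eq_card => e; rewrite /nFset !inE /incident /= eq_sym.
rewrite -e1 /=.
have -> : count (preim inr (fun k => (fT k).1 == w)) L8 = count (fun m => nth v0 (nth dp P m).1 2 == w) L8 by [].
have -> : count (preim inr (fun k => (fT k).2 == w)) L8 = count (fun m => nth v0 (nth dp P m).1 6 == w) L8 by [].
lia.
Qed.

Lemma count_orient_sum (V T : eqType) (f : T -> V * V) o' (s : seq T) w :
  count (fun k => (orient f o' k).1 == w) s + count (fun k => (orient f o' k).2 == w) s =
  count (fun k => (f k).1 == w) s + count (fun k => (f k).2 == w) s.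
Proof.
elim: s => //= k s IH; move: IH; rewrite /orient; case: (o' k) => /=; lia.
Qed.

Lemma arith_tot (n i nf : nat) (b : bool) : i <= n -> n \in [:: 2; 4; 6; 8] ->
  b = ~~ odd i -> nf + (0 < i) + (i < n) = (if b then 3 else 4) ->
  nf + ((i == 2) && (n == 8)) + ((i == 6) && (n == 8)) <= 2.
Proof.
move=> hi; rewrite !inE => /or4P [] /eqP hn; subst n;
  do 9? (case: i hi => [|i] hi //=); move=> -> /=; lia.
Qed.

Lemma outin_le1 w :
  count (fun k => (orient fT o k).1 == w) s0 <= 1 /\
  count (fun k => (orient fT o k).2 == w) s0 <= 1.
Proof.
have [pP hi hv hodd hn] := vinfo w.
have t := tot_eq w; have s := count_orient_sum fT o s0 w.
have v2 := @virt_le w 2 isT; have v6 := @virt_le w 6 isT.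
have a := arith_tot hi hn hodd (nFcard w).
have [b1 b2] := hbal w.
move: t s v2 v6 a b1 b2.
set A := count _ s0; set B := count _ s0; set C := count _ s0; set D := count _ s0.
set G := count _ L8; set H := count _ L8.
lia.
Qed.


Lemma s0_uniq : uniq s0.
Proof.
rewrite /s0 cat_uniq; apply/and3P; split.
- by rewrite map_inj_uniq ?enum_uniq // => ? ? [].
- by apply/negP => /hasP [k /mapP [m _ ->] /mapP [e _]].
- by rewrite map_inj_uniq ?uniq_L8 // => ? ? [].
Qed.

Lemma s0_inl e : e \notin F -> inl e \in s0.
Proof. by move=> eF; rewrite mem_cat map_f // mem_enum inE. Qed.

Lemma two_out w k k' : k \in s0 -> k' \in s0 -> k != k' ->
  ((orient fT o k).1 == w) && ((orient fT o k').1 == w) ||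
  ((orient fT o k).2 == w) && ((orient fT o k').2 == w) -> False.
Proof.
move=> ks k's nkk' /orP [] /andP [h1 h2]; have [c1 c2] := outin_le1 w.
- by have := count2 (a := fun k => (orient fT o k).1 == w) s0_uniq ks k's nkk' h1 h2; rewrite ltnNge c1.
- by have := count2 (a := fun k => (orient fT o k).2 == w) s0_uniq ks k's nkk' h1 h2; rewrite ltnNge c2.
Qed.

Lemma orient_inl e v : incident ex ey e v ->
  ((orient fT o (inl e)).1 == v) = (o (inl e) == is_inl v) /\
  ((orient fT o (inl e)).2 == v) = (o (inl e) != is_inl v).
Proof.
by rewrite /incident /orient => /orP [] /eqP ->; case: (o (inl e)); rewrite /= ?eqxx.
Qed.

Lemma nonF_distinct v e e' : e \in nFset v -> e' \in nFset v -> e != e' ->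
  o (inl e) != o (inl e').
Proof.
rewrite !inE => /andP [eF he] /andP [e'F he'] ne; apply/negP => /eqP eo.
have [a1 a2] := orient_inl he; have [b1 b2] := orient_inl he'.
apply: (@two_out v (inl e) (inl e')); rewrite ?s0_inl //.
by rewrite a1 a2 b1 b2 eo; case: (o (inl e') == is_inl v).
Qed.

Lemma card1_eq (T : finType) (A : {set T}) x y : #|A| <= 1 -> x \in A -> y \in A -> x = y.
Proof.
move=> hA xA yA; apply/eqP; apply: contraLR hA => nxy; rewrite -ltnNge.
have := subset_leq_card (_ : [set x; y] \subset A); rewrite cards2 nxy; apply.
by apply/subsetP => z; rewrite !inE => /orP [] /eqP ->.
Qed.

Lemma interior_nF v : is_inl v -> 0 < index v (pathOf v).1 < size (pathOf v).2 ->
  #|nFset v| = 1.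
Proof. by move=> hv /andP [h1 h2]; have := nFcard v; rewrite hv h1 h2; lia. Qed.

Lemma ty_interior v e : is_inl v -> 0 < index v (pathOf v).1 < size (pathOf v).2 ->
  e \in nFset v -> ty v = o (inl e).
Proof.
move=> hv hi he; have h1 := interior_nF hv hi.
case: v hv hi he h1 => // x _ hi he h1 /=.
apply/existsP/idP => [[e' /andP [/andP [e'F /eqP ex']] oe']|oe].
  have e'n : e' \in nFset (inl x) by rewrite !inE e'F /incident ex' eqxx.
  by rewrite (card1_eq (eq_leq h1) he e'n).
exists e; move: he; rewrite !inE /incident orbF => /andP [-> /eqP [->]].
by rewrite eqxx oe.
Qed.

Lemma exists_nF v : is_inl v -> 0 < index v (pathOf v).1 < size (pathOf v).2 ->
  exists e, e \in nFset v.
Proof.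
move=> hv hi; have h := interior_nF hv hi.
have /card_gt0P [e he] : 0 < #|nFset v| by rewrite h.
by exists e.
Qed.

Lemma vertex_at p j : p \in P -> j <= size p.2 ->
  pathOf (nth v0 p.1 j) = p /\ index (nth v0 p.1 j) p.1 = j.
Proof.
move=> pP hj; have hs := Pvs pP; have [hp _ _] := hP pP; have [_ uv _ _] := and4P hp.
have jm : nth v0 p.1 j \in p.1 by rewrite mem_nth // hs.
by rewrite (pathOf_eq pP jm) index_uniq // hs.
Qed.

Lemma is_inl_at p j : p \in P -> j <= size p.2 -> is_inl (nth v0 p.1 j) = ~~ odd j.
Proof.
move=> pP hj; have [hp hend _] := hP pP; apply: (path_alt hp) => //.
by move: hend; rewrite /ends_in_X; case: (p.1) => // a l /andP [].
Qed.

Lemma type_diff p : p \in P -> size p.2 = 8 -> ty (nth v0 p.1 2) != ty (nth v0 p.1 6).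
Proof.
move=> pP h8.
set x1 := nth v0 p.1 2; set x3 := nth v0 p.1 6.
have j2 : 2 <= size p.2 by rewrite h8.
have j6 : 6 <= size p.2 by rewrite h8.
have [q1 i1] := vertex_at pP j2; have [q3 i3] := vertex_at pP j6.
have l1 : is_inl x1 by rewrite is_inl_at // h8.
have l3 : is_inl x3 by rewrite is_inl_at // h8.
have r1 : 0 < index x1 (pathOf x1).1 < size (pathOf x1).2 by rewrite q1 i1 h8.
have r3 : 0 < index x3 (pathOf x3).1 < size (pathOf x3).2 by rewrite q3 i3 h8.
have [e1 he1] := exists_nF l1 r1; have [e3 he3] := exists_nF l3 r3.
rewrite (ty_interior l1 r1 he1) (ty_interior l3 r3 he3).
set k := inr (index p P) : E + nat.
have ks : k \in s0.
  rewrite mem_cat; apply/orP; right; rewrite map_f // mem_filter nth_index // h8 eqxx /=.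
  by rewrite mem_iota add0n index_mem.
have fk : fT k = (x1, x3) by rewrite /fT /k nth_index.
move: he1 he3; rewrite !inE => /andP [e1F hi1] /andP [e3F hi3].
have [a1 a2] := orient_inl hi1; have [b1 b2] := orient_inl hi3.
rewrite l1 in a1 a2; rewrite l3 in b1 b2.
have n1 : k != inl e1 by []. have n3 : k != inl e3 by [].
case ok : (o k).
- have ek : orient fT o k = (x1, x3) by rewrite /orient ok fk.
  have o1 : o (inl e1) = false.
    apply/negP => oe; apply: (@two_out x1 k (inl e1) ks (s0_inl e1F) n1).
    by rewrite ek a1 oe /= eqxx.
  have o3 : o (inl e3) = true.
    apply/negPn/negP => oe; apply: (@two_out x3 k (inl e3) ks (s0_inl e3F) n3).
    by rewrite ek b2 (negbTE oe) /= eqxx orbT.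
  by rewrite o1 o3.
- have ek : orient fT o k = (x3, x1) by rewrite /orient ok fk.
  have o3 : o (inl e3) = false.
    apply/negP => oe; apply: (@two_out x3 k (inl e3) ks (s0_inl e3F) n3).
    by rewrite ek b1 oe /= eqxx.
  have o1 : o (inl e1) = true.
    apply/negPn/negP => oe; apply: (@two_out x1 k (inl e1) ks (s0_inl e1F) n1).
    by rewrite ek a2 (negbTE oe) /= eqxx orbT.
  by rewrite o1 o3.
Qed.


Lemma col_ok p : p \in P ->
  colok (size p.2) (nth false (map ty p.1) 2) (nth false (map ty p.1) 4) (nth false (map ty p.1) 6) &&
  all (vok (size p.2) (nth false (map ty p.1) 2) (nth false (map ty p.1) 4) (nth false (map ty p.1) 6)) (iota 0 (size p.2).+1).
Proof.
move=> pP; have [_ _ hn] := hP pP; apply: tab_ok => // /eqP h8.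
have hs := Pvs pP.
by rewrite !(nth_map v0) ?hs ?h8 // type_diff.
Qed.

Lemma ttype_eq p i : p \in P -> i \in [:: 2; 4; 6] -> i <= size p.2 ->
  ttype (nth false (map ty p.1) 2) (nth false (map ty p.1) 4) (nth false (map ty p.1) 6) i = ty (nth v0 p.1 i).
Proof.
move=> pP hi hin; have hs := Pvs pP.
by move: hi hin; rewrite !inE => /or3P [] /eqP -> hin; rewrite /ttype /= (nth_map v0) // hs ltnS.
Qed.

Lemma Fedge v e : e \in F -> e \in Inc v ->
  let p := pathOf v in let i := index v p.1 in
  ((0 < i) /\ c e = nth 0 (colp p) i.-1 /\ e = nth e0 p.2 i.-1) \/
  ((i < size p.2) /\ c e = nth 0 (colp p) i /\ e = nth e0 p.2 i).
Proof.
move=> eF; rewrite inE => hinc p i.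
have [ep [] hj] := F_inc eF hinc; rewrite (cF eF hinc) -/p -/i in ep hj *.
- by right; rewrite -hj index_mem nth_index.
- by left; rewrite -hj /= nth_index.
Qed.

Lemma cF_range e : e \in F -> c e \in [:: 1; 2; 5; 6].
Proof.
move=> eF; have hinc : e \in Inc (inl (ex e)) by rewrite inE /incident eqxx.
have [pP hi _ _ _] := vinfo (inl (ex e)).
have /andP [/allP hc _] := col_ok pP.
case: (Fedge eF hinc) => [[h1 [-> _]]|[h1 [-> _]]]; apply: hc; rewrite mem_iota /=.
  by rewrite prednK // (leq_trans _ hi).
exact: h1.
Qed.

Lemma c_nF e : e \notin F -> c e = if o (inl e) then 3 else 4.
Proof. by rewrite /c => /negbTE ->. Qed.

Lemma vertex_ok v :
  {in Inc v &, injective c} /\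
  exists a, forall e, e \in Inc v -> a <= c e < a + (if is_inl v then 3 else 4).
Proof.
have [pP hi hv hodd hn] := vinfo v.
have /andP [_ /allP hvok] := col_ok pP.
have := hvok (index v (pathOf v).1); rewrite mem_iota /= ltnS => /(_ hi).
have tte := ttype_eq pP.
rewrite /vok.
have FE := Fedge (v := v).
rewrite /colp in FE.
set p := pathOf v in pP hi hv hodd hn tte FE *; set i := index v p.1 in hi hv hodd tte FE *.
set t1 := nth false _ 2; set t2 := nth false _ 4; set t3 := nth false _ 6.
set col := tab _ _ _ _; rewrite -/col in FE.
set c1 := nth 0 col i.-1; set c2 := nth 0 col i.
move=> hvk.
have nFc : forall e, e \in Inc v -> e \notin F -> e \in nFset v /\ (c e = 3 \/ c e = 4).
  move=> e; rewrite !inE => he eF; rewrite he eF c_nF //; split => //.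
  by case: (o (inl e)); [left|right].
have hn0 : 0 < size p.2 by move: hn; rewrite !inE; case/or4P => /eqP ->.
have hev : ~~ odd (size p.2) by move: hn; rewrite !inE; case/or4P => /eqP ->.
split.
- move=> e e' he he' ce; apply/eqP/negP => /negP ne.
  case: (boolP (e \in F)) => eF; case: (boolP (e' \in F)) => e'F.
  + have hc12 : 0 < i -> i < size p.2 -> c1 != c2.
      move=> h1 h2; move: hvk; rewrite (negbTE (lt0n_neq0 h1)) /= (ltn_eqF h2).
      by case: (odd i) => /andP [].
    case: (FE e eF he) => [[h1 [ce1 ee1]]|[h1 [ce1 ee1]]];
    case: (FE e' e'F he') => [[h1' [ce1' ee1']]|[h1' [ce1' ee1']]];
    try by move: ne; rewrite ee1 ee1' eqxx.
    * by have := hc12 h1 h1'; rewrite /c1 /c2 -ce1 -ce1' ce eqxx.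
    * by have := hc12 h1' h1; rewrite /c1 /c2 -ce1 -ce1' ce eqxx.
  + have := cF_range eF; rewrite ce; by have [_ [] ->] := nFc _ he' e'F.
  + have := cF_range e'F; rewrite -ce; by have [_ [] ->] := nFc _ he eF.
  + have [hn1 _] := nFc _ he eF; have [hn2 _] := nFc _ he' e'F.
    have := nonF_distinct hn1 hn2 ne.
    by move: ce; rewrite !c_nF //; case: (o (inl e)); case: (o (inl e')).
- case: (posnP i) => [i0|ip].
  +
    move: hvk; rewrite i0 eqxx => hc2.
    exists (if c2 == 2 then 2 else 3) => e he.
    have hl : is_inl v by rewrite hodd i0.
    rewrite hl.
    case: (boolP (e \in F)) => eF.
      case: (FE e eF he) => [[h1 _]|[_ [-> _]]]; first by rewrite i0 in h1.
      by move: hc2; rewrite -/c2 !inE => /orP [] /eqP ->.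
    have [_ [] ->] := nFc _ he eF; by case: (c2 == 2).
  case: (ltnP i (size p.2)) => hin.
  + move: hvk; rewrite (negbTE (lt0n_neq0 ip)) (ltn_eqF hin).
    case ho : (odd i) => /andP [_ hk].
    * case/hasP: hk => a ain /andP [ha1 ha2].
      exists a => e he; have hl : is_inl v = false by rewrite hodd ho.
      rewrite hl.
      case: (boolP (e \in F)) => eF.
        by case: (FE e eF he) => [[_ [-> _]]|[_ [-> _]]]; rewrite -/c1 -/c2; apply: rngY.
      by have [_ [] ->] := nFc _ he eF; move: ain; rewrite !inE => /or3P [] /eqP ->.
    * have hl : is_inl v by rewrite hodd ho.
      have i246 : i \in [:: 2; 4; 6] by apply: (even_mid ip hin _ hn); rewrite ho.
      rewrite (tte _ i246 (ltnW hin)) -/p hv in hk.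
      have hr : 0 < index v (pathOf v).1 < size (pathOf v).2 by rewrite -/p -/i ip hin.
      exists (if ty v then 1 else 4) => e he; rewrite hl.
      case: (boolP (e \in F)) => eF.
        case: (FE e eF he) => [[_ [-> _]]|[_ [-> _]]]; rewrite -/c1 -/c2; move: hk;
          move: (c1) (c2) => x y; case: (ty v) => /andP [hx hy]; move: hx hy;
          by rewrite !inE => /orP [] /eqP hx /orP [] /eqP hy; rewrite ?hx ?hy.
      have [hnf _] := nFc _ he eF.
      by rewrite c_nF // -(ty_interior hl hr hnf); case: (ty v).
  + have ein : i = size p.2 by apply/eqP; rewrite eqn_leq hi hin.
    move: hvk; rewrite (negbTE (lt0n_neq0 ip)) (_ : (i == size p.2) = true); last by rewrite ein eqxx.
    move=> hc1.
    exists (if c1 == 2 then 2 else 3) => e he.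
    have hl : is_inl v by rewrite hodd ein.
    rewrite hl.
    case: (boolP (e \in F)) => eF.
      case: (FE e eF he) => [[_ [-> _]]|[h1 _]]; last by rewrite ein ltnn in h1.
      rewrite -/c1; move: hc1; rewrite -/c1; move: (c1) => x.
      by rewrite !inE => /orP [] /eqP ->.
    have [_ [] ->] := nFc _ he eF; by case: (c1 == 2).
Qed.

Theorem coloring_ok : interval_coloring ex ey 6 c.
Proof.
split.
- move=> e; case: (boolP (e \in F)) => eF.
    by have := cF_range eF; rewrite !inE => /or4P [] /eqP ->.
  by rewrite c_nF //; case: (o (inl e)).
- move=> e e' v ne ie ie'; have [inj _] := vertex_ok v.
  by apply: contra ne => /eqP h; apply/eqP; apply: inj; rewrite ?inE.
- move=> v e1 e2 n ie1 ie2 hn.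
  have [inj [a ha]] := vertex_ok v.
  set d := if is_inl v then 3 else 4.
  have cd : #|Inc v| = d by rewrite card_inc /d; case: (v).
  have us : uniq (map c (enum (Inc v))).
    by rewrite map_inj_in_uniq ?enum_uniq // => x y; rewrite !mem_enum; apply: inj.
  have sub : {subset map c (enum (Inc v)) <= iota a d}.
    move=> m /mapP [e]; rewrite mem_enum => he ->.
    by rewrite mem_iota; apply: ha.
  have hsz : size (iota a d) <= size (map c (enum (Inc v))).
    by rewrite size_iota size_map -cardE cd.
  have [_ eqs] := uniq_min_size us sub hsz.
    have : n \in iota a d.
      have h1 : a <= c e1 < a + d by apply: ha; rewrite inE.
      have h2 : a <= c e2 < a + d by apply: ha; rewrite inE.
      rewrite mem_iota; move: h1 h2 hn; move: (c e1) (c e2) => x y.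
      clear; lia.
    rewrite -eqs => /mapP [e]; rewrite mem_enum inE => he ->.
    by exists e.
Qed.

End Main.

Theorem mainTheorem2 (X Y E : finType) (ex : E -> X) (ey : E -> Y) :
  biregular34 ex ey ->
  has_proper_path_factor ex ey ->
  exists c : E -> nat, interval_coloring ex ey 6 c.
Proof.
move=> [hX hY] [F [P [hPath hdisj hcov hFe]]].
case: (pickP (fun _ : E => true)) => [e0 _|hE]; last first.
  by exists (fun _ => 1); split => [e|e|v e]; have := hE e.
pose v0 : X + Y := inl (ex e0).
have [o ho] := @orient_lemma _ (size (s0 F P)) _ (fT ex ey P v0) (s0 F P) (leqnn _) (s0_uniq F P).
eexists.
exact: (coloring_ok hPath hdisj hcov hFe hX hY e0 ho).
Qed.
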